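(* Let $0<\beta<1$, $p=\lceil\beta^{-1}\rceil-1$, and let $s,t$ be integers with $2\le t<s\le p+1$. Let $G$ be a graph of order $n$ with minimum degree $(1-\beta)n$. Then for every $S\in\mathcal{K}_s$, $$\sum_{T\in\mathcal{K}_t(S)}D_-(T)\ \ge\ (1-\beta)s\binom{s-2}{t-1}-(t-1)\binom{s-1}{t}+\binom{s-2}{t-2}D_-(S).$$ In particular, for $2\le t\le p$ and $S\in\mathcal{K}_{t+1}$, $\widetilde D(S)\ge 0$, where $\widetilde D(S)=\sum_{T\in\mathcal{K}_t(S)}D_-(T)-\big(2-(t+1)\beta+(t-1)D_-(S)\big)$.
   Context: All graphs are finite and simple. For a graph $G$, $\mathcal{K}_t$ denotes the set of $t$-cliques of $G$ (identified with their vertex sets); for a clique $S$, $\mathcal{K}_t(S)$ is the set of $t$-cliques contained in $S$. The degree $d(T)$ of a $t$-clique $T$ is the number of $(t+1)$-cliques containing $T$, and $D(T)=d(T)/n$ where $n=|V(G)|$. For $0<\beta<1$ with $p=\lceil\beta^{-1}\rceil-1$, and $T\in\mathcal{K}_t$ with $1\le t\le p+1$, define $D_-(T)=\min\{D(T),(p-t+1)\beta\}$. *)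

(* Defs.v *)
From HB Require Import structures.
From mathcomp Require Import all_boot all_order all_algebra.
Set Implicit Arguments. Unset Strict Implicit. Unset Printing Implicit Defensive.
Import Order.TTheory GRing.Theory Num.Theory.
Local Open Scope ring_scope.

Section Graphs.
Variable V : finType.
Variable e : rel V.

Definition simple_graph := symmetric e /\ irreflexive e.

Definition is_clique (A : {set V}) : bool :=
  [forall x in A, forall y in A, (x != y) ==> e x y].

Definition Kcl (t : nat) : {set {set V}} :=
  [set A : {set V} | is_clique A && (#|A| == t)%N].

Definition Kcl_in (t : nat) (S : {set V}) : {set {set V}} :=
  [set A in Kcl t | A \subset S].

Definition cdeg (A : {set V}) : nat := #|[set B in Kcl #|A|.+1 | A \subset B]|.

Definition vdeg (v : V) : nat := #|[set w | e v w]|.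

Definition Dn {R : numFieldType} (A : {set V}) : R := (cdeg A)%:R / (#|V|)%:R.

Definition Dminus {R : numFieldType} (p : nat) (beta : R) (A : {set V}) : R :=
  Num.min (Dn A) (((p%:R - (#|A|)%:R + 1) * beta)).

End Graphs.

(* Main.v *)
Require Import Defs.
From HB Require Import structures.
From mathcomp Require Import all_boot all_order all_algebra.
From mathcomp Require Import ring lra zify.
Import Order.TTheory GRing.Theory Num.Theory.
Set Implicit Arguments. Unset Strict Implicit. Unset Printing Implicit Defensive.

Lemma is_cliqueP (V : finType) (e : rel V) (A : {set V}) :
  reflect (forall x y, x \in A -> y \in A -> x != y -> e x y) (is_clique e A).
Proof.
apply: (iffP forall_inP) => [H x y xA yA xy | H x xA].
  by move/forall_inP: (H x xA) => /(_ y yA) /implyP; apply.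
by apply/forall_inP => y yA; apply/implyP; apply: H.
Qed.

Lemma clique_sub (V : finType) (e : rel V) (A B : {set V}) :
  A \subset B -> is_clique e B -> is_clique e A.
Proof.
move=> /subsetP AB /is_cliqueP H; apply/is_cliqueP => x y xA yA; apply: H; exact: AB.
Qed.

Lemma card_ext (V : finType) (A : {set V}) (Q : pred {set V}) :
  #|[set B : {set V} | [&& A \subset B, #|B| == #|A|.+1 & Q B]]| =
  #|[set w | (w \notin A) && Q (w |: A)]|.
Proof.
rewrite -[RHS](card_in_imset (f := fun w => w |: A)); last first.
  move=> w1 w2; rewrite !inE => /andP[w1A _] /andP[w2A _] E.
  have : w1 \in w2 |: A by rewrite -E setU11.
  by case/setU1P => // w1inA; rewrite w1inA in w1A.
apply: eq_card => B; rewrite inE; apply/idP/imsetP.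
  case/and3P => AB /eqP cB QB.
  have : #|B :\: A| == 1%N.
    by rewrite cardsD (setIidPr AB) cB subSnn.
  case/cards1P => w Ew.
  have wBA : w \in B :\: A by rewrite Ew set11.
  move: (wBA); rewrite inE => /andP[wA wB].
  have EB : B = w |: A.
    rewrite -Ew; apply/setP => x; rewrite !inE.
    by case xA: (x \in A); rewrite /= ?orbT ?orbF ?andbT // (subsetP AB).
  exists w => //; rewrite inE wA /= -EB //.
case=> w; rewrite inE => /andP[wA Qw] ->.
by rewrite subsetUr cardsU1 wA Qw add1n eqxx.
Qed.

Definition mdeg (V : finType) (e : rel V) (A : {set V}) (w : V) : nat :=
  #|[set x in A | ~~ e x w]|.

Lemma mdeg0P (V : finType) (e : rel V) (A : {set V}) (w : V) :
  reflect (forall x, x \in A -> e x w) (mdeg e A w == 0%N).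
Proof.
rewrite /mdeg cards_eq0; apply: (iffP eqP) => [H x xA | H].
  have : x \notin [set x in A | ~~ e x w] by rewrite H inE.
  by rewrite inE xA /= negbK.
by apply/setP => x; rewrite !inE; case xA: (x \in A) => //=; rewrite H.
Qed.

Lemma cdegE (V : finType) (e : rel V) (A : {set V}) :
  symmetric e -> irreflexive e -> is_clique e A ->
  cdeg e A = #|[set w | mdeg e A w == 0%N]|.
Proof.
move=> sym irr Acl; rewrite /cdeg.
have -> : [set B in Kcl e #|A|.+1 | A \subset B] =
   [set B : {set V} | [&& A \subset B, #|B| == #|A|.+1 & is_clique e B]].
  apply/setP => B; rewrite /Kcl !inE.
  by case: (A \subset B); case: (is_clique e B); case: (_ == _).
rewrite (card_ext A (is_clique e)); apply: eq_card => w; rewrite !inE; apply/andP/mdeg0P.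
  case=> wA /is_cliqueP cl x xA; apply: cl; rewrite ?inE ?xA ?orbT ?eqxx //.
  by apply/eqP => xw; rewrite -xw xA in wA.
move=> H; split.
  by apply/negP => wA; have := H w wA; rewrite irr.
apply/is_cliqueP => x y /setU1P[->|xA] /setU1P[->|yA]; rewrite ?eqxx //.
- by move=> _; rewrite sym; apply: H.
- by move=> _; apply: H.
- by move/is_cliqueP: Acl; apply.
Qed.

Lemma card_sumE (V : finType) (P : pred V) :
  #|[set w | P w]| = (\sum_w (P w : nat))%N.
Proof.
rewrite -sum1_card big_mkcond /=; apply: eq_bigr => w _; rewrite inE.
by case: (P w).
Qed.

Lemma sum_mdeg (V : finType) (e : rel V) (A : {set V}) :
  (\sum_w mdeg e A w = \sum_(x in A) (#|V| - vdeg e x))%N.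
Proof.
have -> : (\sum_w mdeg e A w = \sum_w \sum_(x in A) (~~ e x w : nat))%N.
  apply: eq_bigr => w _; rewrite /mdeg card_sumE [RHS]big_mkcond /=.
  by apply: eq_bigr => x _; case: (x \in A).
rewrite exchange_big /=; apply: eq_bigr => x _.
rewrite -card_sumE /vdeg.
have -> : [set w | ~~ e x w] = ~: [set w | e x w].
  by apply/setP => w; rewrite !inE.
by rewrite cardsCs setCK.
Qed.

Lemma cdeg_lb (V : finType) (e : rel V) (A : {set V}) :
  symmetric e -> irreflexive e -> is_clique e A ->
  (#|V| <= cdeg e A + \sum_(x in A) (#|V| - vdeg e x))%N.
Proof.
move=> sym irr Acl; rewrite (cdegE sym irr Acl) card_sumE -sum_mdeg -big_split /=.
rewrite -sum1_card; apply: leq_sum => w _.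
by case: (mdeg e A w).
Qed.

Lemma cdeg_D1 (V : finType) (e : rel V) (S : {set V}) (x : V) :
  symmetric e -> irreflexive e -> is_clique e S ->
  (cdeg e (S :\ x) <= cdeg e S + (#|V| - vdeg e x))%N.
Proof.
move=> sym irr Scl.
have Sxcl : is_clique e (S :\ x) by apply: clique_sub Scl; apply: subsetDl.
rewrite (cdegE sym irr Scl) (cdegE sym irr Sxcl) /vdeg.
have -> : (#|V| - #|[set w | e x w]| = #|[set w | ~~ e x w]|)%N.
  have -> : [set w | ~~ e x w] = ~: [set w | e x w].
    by apply/setP => w; rewrite !inE.
  by rewrite [in RHS]cardsCs setCK.
rewrite !card_sumE -big_split /=; apply: leq_sum => w _.
case exw: (e x w); last by rewrite addn1; case: (_ == _).
rewrite addn0; case: (mdeg0P e (S :\ x) w) => // H.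
have -> // : mdeg e S w == 0%N.
apply/mdeg0P => y yS; case: (eqVneq y x) => [->//|yx].
by apply: H; rewrite !inE yx.
Qed.

Lemma cdeg_A (V : finType) (e : rel V) (S : {set V}) :
  symmetric e -> irreflexive e -> is_clique e S -> (2 <= #|S|)%N ->
  (2 * #|V| + (#|S| - 2) * cdeg e S <=
     \sum_(x in S) cdeg e (S :\ x) + \sum_w mdeg e S w)%N.
Proof.
move=> sym irr Scl S2.
have Sxcl x : is_clique e (S :\ x) by apply: clique_sub Scl; apply: subsetDl.
have -> : (\sum_(x in S) cdeg e (S :\ x) =
   \sum_(x in S) \sum_w (mdeg e (S :\ x) w == 0%N))%N.
  by apply: eq_bigr => x _; rewrite (cdegE sym irr (Sxcl x)) card_sumE.
rewrite (cdegE sym irr Scl) card_sumE big_distrr /=.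
rewrite exchange_big /= -big_split /=.
have -> : (2 * #|V| = \sum_(w : V) 2)%N by rewrite -sum1_card big_distrr /= muln1.
rewrite -big_split /=; apply: leq_sum => w _.
case m0: (mdeg e S w == 0%N).
  have -> : (\sum_(x in S) (mdeg e (S :\ x) w == 0%N) = \sum_(x in S) 1)%N.
    apply: eq_bigr => x _; suff -> : mdeg e (S :\ x) w == 0%N by [].
    rewrite eqE /=.
    apply/mdeg0P => y; rewrite inE => /andP[_ yS].
    by move/mdeg0P: m0; apply.
  by rewrite sum1_card muln1 (eqP m0) addn0 subnKC.
rewrite muln0 addn0.
case m1: (mdeg e S w == 1%N).
  move: (m1); rewrite /mdeg => /cards1P[y Ey].
  have yS : y \in S.
    have : y \in [set x in S | ~~ e x w] by rewrite Ey set11.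
    by rewrite inE => /andP[].
  rewrite (bigD1 y) //=.
  have -> : mdeg e (S :\ y) w == 0%N.
    apply/mdeg0P => z; rewrite !inE => /andP[zy zS].
    apply/negPn/negP => nz.
    have : z \in [set x in S | ~~ e x w] by rewrite inE zS nz.
    by rewrite Ey inE (negbTE zy).
  by rewrite Ey cards1 addn1 ltnS leq_addr.
apply: leq_trans (leq_addl _ _).
by move: m0 m1; case: (mdeg e S w) => [|[|n]].
Qed.

Lemma inKclin (V : finType) (e : rel V) (S T : {set V}) (t : nat) :
  is_clique e S -> (T \in Kcl_in e t S) = (T \subset S) && (#|T| == t).
Proof.
move=> Scl; rewrite /Kcl_in /Kcl !inE.
case TS: (T \subset S); last by rewrite andbF.
by rewrite (clique_sub TS Scl) andbT.
Qed.

Lemma cardD1S (V : finType) (S : {set V}) x :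
  x \in S -> #|S :\ x| = #|S|.-1.
Proof. by move=> xS; rewrite (cardsD1 x S) xS. Qed.

Local Open Scope ring_scope.

Lemma Kcl_in_D1 (V : finType) (e : rel V) (S : {set V}) (t : nat)
  (R : nmodType) (f : {set V} -> R) :
  is_clique e S -> #|S| = t.+1 ->
  \sum_(T in Kcl_in e t S) f T = \sum_(x in S) f (S :\ x).
Proof.
move=> Scl cS.
have -> : Kcl_in e t S = (fun x => S :\ x) @: S.
  apply/setP => T; rewrite (inKclin _ _ Scl); apply/andP/imsetP.
    case=> TS /eqP cT.
    have : #|S :\: T| == 1%N by rewrite cardsD (setIidPr TS) cS cT subSnn.
    case/cards1P => x Ex.
    have : x \in S :\: T by rewrite Ex set11.
    rewrite inE => /andP[xT xS]; exists x => //.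
    apply/eqP; rewrite eqEcard (cardD1S xS) cS cT leqnn andbT.
    apply/subsetP => y yT; rewrite !inE (subsetP TS _ yT) andbT.
    by apply/eqP => yx; rewrite -yx yT in xT.
  case=> x xS ->; split; first exact: subsetDl.
  by rewrite (cardD1S xS) cS.
rewrite big_imset //= => x y xS yS E.
apply/eqP; apply/negPn/negP => xy.
have : x \in S :\ y by rewrite !inE xy xS.
by rewrite -E !inE eqxx.
Qed.

Lemma Kcl_in_self (V : finType) (e : rel V) (S : {set V}) :
  is_clique e S -> Kcl_in e #|S| S = [set S].
Proof.
move=> Scl; apply/setP => T; rewrite (inKclin _ _ Scl) inE.
apply/andP/eqP => [[TS /eqP cT]|->]; last by rewrite subxx eqxx.
by apply/eqP; rewrite eqEcard TS cT leqnn.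
Qed.

Lemma card_Kcl_in (V : finType) (e : rel V) (S : {set V}) (k : nat) :
  is_clique e S -> #|Kcl_in e k S| = 'C(#|S|, k).
Proof.
move=> Scl; rewrite -cards_draws; apply: eq_card => T.
by rewrite (inKclin _ _ Scl) inE.
Qed.

Lemma double_count (V : finType) (e : rel V) (S : {set V}) (t : nat)
  (R : nmodType) (f : {set V} -> R) :
  is_clique e S ->
  \sum_(U in Kcl_in e t.+1 S) \sum_(T in Kcl_in e t U) f T =
  (\sum_(T in Kcl_in e t S) f T) *+ (#|S| - t).
Proof.
move=> Scl.
have -> : \sum_(U in Kcl_in e t.+1 S) \sum_(T in Kcl_in e t U) f T =
   \sum_(U in Kcl_in e t.+1 S) \sum_(T | (T \in Kcl_in e t S) && (T \subset U)) f T.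
  apply: eq_bigr => U; rewrite (inKclin _ _ Scl) => /andP[US _].
  apply: eq_bigl => T.
  rewrite (inKclin _ _ (clique_sub US Scl)) (inKclin _ _ Scl).
  case TU: (T \subset U); last by rewrite !andbF.
  by rewrite (subset_trans TU US) /= andbT.
rewrite (exchange_big_dep (fun T => T \in Kcl_in e t S)) /=; last first.
  by move=> U T _ /andP[].
rewrite -sumrMnl; apply: eq_bigr => T TK.
rewrite sumr_const; congr (_ *+ _).
move: TK; rewrite (inKclin _ _ Scl) => /andP[TS /eqP cT].
have Tcl := clique_sub TS Scl.
transitivity #|[set B : {set V} | [&& T \subset B, #|B| == #|T|.+1 & (B \subset S)]]|.
  apply: eq_card => U; rewrite unfold_in /= (inKclin (U : {set V}) t.+1 Scl) inE TS cT eqxx /=.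
  by case: (T \subset U); case: (U \subset S); case: (_ == _).
rewrite (card_ext T (fun B => B \subset S)).
have -> : [set w | (w \notin T) && (w |: T \subset S)] = S :\: T.
  apply/setP => w; rewrite !inE subUset sub1set TS andbT.
  by rewrite andbC.
by rewrite cardsD (setIidPr TS) cT.
Qed.

Lemma nvdeg (R : realFieldType) (beta : R) (V : finType) (e : rel V) (x : V) :
  (1 - beta) * (#|V|)%:R <= (vdeg e x)%:R ->
  ((#|V| - vdeg e x)%N%:R : R) <= beta * (#|V|)%:R.
Proof.
move=> h; rewrite natrB; last exact: max_card.
lra.
Qed.

Lemma sum_nvdeg (R : realFieldType) (beta : R) (V : finType) (e : rel V) (A : {set V}) :
  (forall v : V, (1 - beta) * (#|V|)%:R <= (vdeg e v)%:R) ->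
  (\sum_(x in A) (#|V| - vdeg e x)%N)%:R <= (#|A|)%:R * (beta * (#|V|)%:R) :> R.
Proof.
move=> h; rewrite natr_sum.
apply: le_trans (ler_sum _ (fun x _ => nvdeg (h x))) _.
by rewrite sumr_const mulr_natl.
Qed.

Lemma Dn_lb (R : realFieldType) (beta : R) (V : finType) (e : rel V) (A : {set V}) :
  symmetric e -> irreflexive e -> is_clique e A -> (0 < #|V|)%N ->
  (forall v : V, (1 - beta) * (#|V|)%:R <= (vdeg e v)%:R) ->
  1 - (#|A|)%:R * beta <= Dn e A.
Proof.
move=> sym irr Acl n0 h; rewrite /Dn ler_pdivlMr ?ltr0n //.
have h1 := cdeg_lb sym irr Acl; rewrite -(ler_nat R) natrD in h1.
have h2 := sum_nvdeg A h.
lra.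
Qed.

Lemma Dn_C (R : realFieldType) (beta : R) (V : finType) (e : rel V) (S : {set V}) x :
  symmetric e -> irreflexive e -> is_clique e S -> (0 < #|V|)%N ->
  (forall v : V, (1 - beta) * (#|V|)%:R <= (vdeg e v)%:R) ->
  Dn e (S :\ x) <= Dn e S + beta.
Proof.
move=> sym irr Scl n0 h; rewrite /Dn.
have N0 : 0 < (#|V|)%:R :> R by rewrite ltr0n.
rewrite ler_pdivrMr // mulrDl divfK ?lt0r_neq0 //.
have h1 := cdeg_D1 x sym irr Scl; rewrite -(ler_nat R) natrD in h1.
have h2 := nvdeg (h x).
lra.
Qed.

Lemma Dn_A (R : realFieldType) (beta : R) (V : finType) (e : rel V) (S : {set V}) :
  symmetric e -> irreflexive e -> is_clique e S -> (0 < #|V|)%N -> (2 <= #|S|)%N ->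
  (forall v : V, (1 - beta) * (#|V|)%:R <= (vdeg e v)%:R) ->
  2 - (#|S|)%:R * beta + (#|S| - 2)%N%:R * Dn e S <= \sum_(x in S) Dn e (S :\ x).
Proof.
move=> sym irr Scl n0 S2 h; rewrite /Dn -mulr_suml -natr_sum.
have N0 : 0 < (#|V|)%:R :> R by rewrite ltr0n.
rewrite ler_pdivlMr //.
have h1 := cdeg_A sym irr Scl S2; rewrite sum_mdeg -(ler_nat R) !natrD !natrM in h1.
have h2 := sum_nvdeg S h.
have h3 : ((#|S| - 2)%N%:R * ((cdeg e S)%:R / (#|V|)%:R)) * (#|V|)%:R
   = (#|S| - 2)%N%:R * (cdeg e S)%:R :> R by rewrite -mulrA divfK ?lt0r_neq0.
rewrite mulrDl h3.
lra.
Qed.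

Lemma base (R : realFieldType) (beta : R) (p : nat) (V : finType) (e : rel V)
  (t : nat) (S : {set V}) :
  symmetric e -> irreflexive e -> (0 < #|V|)%N ->
  (forall v : V, (1 - beta) * (#|V|)%:R <= (vdeg e v)%:R) ->
  1 <= (p%:R + 1) * beta -> (2 <= t)%N -> S \in Kcl e t.+1 ->
  2 - (t.+1)%:R * beta + (t - 1)%:R * Dminus e p beta S
    <= \sum_(T in Kcl_in e t S) Dminus e p beta T.
Proof.
move=> sym irr n0 h key t2 SK.
move: SK; rewrite /Kcl inE => /andP[Scl /eqP cS].
rewrite (Kcl_in_D1 _ Scl cS).
have tR : (t - 1)%:R = t%:R - 1 :> R by rewrite natrB // ltnW.
have t1R : (t.+1)%:R = t%:R + 1 :> R by rewrite -addn1 natrD.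
have Em : forall x, x \in S ->
    Dminus e p beta (S :\ x) = Num.min (Dn e (S :\ x)) ((p%:R - t%:R + 1) * beta).
  by move=> x xS; rewrite /Dminus (cardD1S xS) cS.
have EmS : Dminus e p beta S = Num.min (Dn e S) ((p%:R - t%:R + 1) * beta - beta).
  by rewrite /Dminus cS t1R; congr (Num.min _ _); ring.
rewrite (eq_bigr _ Em) EmS.
have hA : 2 - (t.+1)%:R * beta + (t - 1)%:R * Dn e S <= \sum_(x in S) Dn e (S :\ x).
  by have := Dn_A sym irr Scl n0 _ h; rewrite cS subSS; apply; apply: ltnW.
have hC x : Dn e (S :\ x) <= Dn e S + beta by apply: Dn_C.
have hD x : x \in S -> 1 - t%:R * beta <= Dn e (S :\ x).
  move=> xS; have := Dn_lb sym irr (clique_sub (subsetDl S [set x]) Scl) n0 h.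
  by rewrite (cardD1S xS) cS.
have m0c : 1 - t%:R * beta <= (p%:R - t%:R + 1) * beta by lra.
have [c cE] : exists c : R, c = (p%:R - t%:R + 1) * beta by eexists.
rewrite -cE in Em EmS m0c *.
have [z zE] : exists z : R, z = Dn e S by eexists.
rewrite -zE in EmS hA hC *.
set U := [set x in S | Dn e (S :\ x) < c].
have US : U \subset S by apply/subsetP => x; rewrite inE => /andP[].
have cSU : #|S :\: U| = (t.+1 - #|U|)%N by rewrite cardsD (setIidPr US) cS.
rewrite (big_setID (A := S) U) /= (setIidPr US).
case: (leqP 2 #|U|) => HU.
  have [d [d0 dz H4']] : exists d : R,
      [/\ 0 <= d, z + beta - c <= d & Num.min z (c - beta) <= z - d].
    exists (Num.max 0 (z + beta - c)); split.
    - by rewrite le_max lexx.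
    - by rewrite le_max lexx orbT.
    rewrite maxEle; case: ifPn => hh; rewrite ge_min; apply/orP; [right|left]; lra.
  have H3 : \sum_(x in U) Num.min (Dn e (S :\ x)) c = \sum_(x in U) Dn e (S :\ x).
    by apply: eq_bigr => x; rewrite inE => /andP[_ lt]; rewrite minEle (ltW lt).
  have H1 : \sum_(x in S) Dn e (S :\ x) =
      \sum_(x in U) Dn e (S :\ x) + \sum_(x in S :\: U) Dn e (S :\ x) :> R.
    by rewrite (big_setID (A := S) U) /= (setIidPr US).
  have H2 : \sum_(x in S :\: U) Dn e (S :\ x) - (t - 1)%:R * d <=
      \sum_(x in S :\: U) Num.min (Dn e (S :\ x)) c.
    apply: le_trans (_ : \sum_(x in S :\: U) (Dn e (S :\ x) - d) <= _); last first.
      apply: ler_sum => x _; rewrite le_min; apply/andP; split; first lra.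
      have := hC x; lra.
    rewrite sumrB sumr_const lerD2l lerN2 -[d *+ _]mulr_natl ler_wpM2r // ler_nat cSU.
    lia.
  have H4 : (t - 1)%:R * Num.min z (c - beta) <= (t - 1)%:R * (z - d).
    by apply: ler_wpM2l.
  rewrite H3; lra.
have HU' : #|U| = 0%N \/ #|U| = 1%N by move: HU; case: #|U| => [|[|]]; auto.
have H5 : (1 - t%:R * beta) *+ #|U| <= \sum_(x in U) Num.min (Dn e (S :\ x)) c.
  rewrite -sumr_const; apply: ler_sum => x; rewrite inE => /andP[xS _].
  by rewrite le_min hD.
have H6 : c *+ #|S :\: U| <= \sum_(x in S :\: U) Num.min (Dn e (S :\ x)) c.
  rewrite -sumr_const; apply: ler_sum => x; rewrite !inE => /andP[hU xS].
  by rewrite xS /= -leNgt in hU; rewrite le_min lexx andbT.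
have H7 : Num.min z (c - beta) <= c - beta by rewrite ge_min lexx orbT.
have H8 : (t - 1)%:R * Num.min z (c - beta) <= (t - 1)%:R * (c - beta).
  by apply: ler_wpM2l.
rewrite cSU in H6.
case: HU' => E; rewrite E in H5 H6.
  rewrite subn0 -mulr_natl in H6; rewrite mulr0n in H5.
  rewrite t1R in H6; rewrite t1R tR in H8 *; lra.
rewrite (_ : (t.+1 - 1 = t)%N) ?subn1 // -mulr_natl in H6; rewrite mulr1n in H5.
rewrite t1R tR in H8 *; lra.
Qed.

Lemma binom_id (R : numFieldType) (beta D : R) (s t : nat) :
  (2 <= t)%N -> (t < s)%N ->
  (s - t)%:R * ((1 - beta) * s%:R * ('C(s - 2, t - 1))%:R
         - (t - 1)%:R * ('C(s - 1, t))%:R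
         + ('C(s - 2, t - 2))%:R * D)
  = ('C(s, t.+1))%:R * (2 - (t.+1)%:R * beta) +
    (t - 1)%:R * ((1 - beta) * s%:R * ('C(s - 2, t.+1 - 1))%:R
         - (t.+1 - 1)%:R * ('C(s - 1, t.+1))%:R
         + ('C(s - 2, t.+1 - 2))%:R * D).
Proof.
move=> t2 ts.
have [u tu] : exists u, t = u.+2 by exists (t - 2)%N; lia.
have [k sk] : exists k, s = (u + k).+3 by exists (s - t - 1)%N; lia.
subst t s.
have -> : ((u + k).+3 - 2 = (u + k).+1)%N by lia.
have -> : ((u + k).+3 - 1 = (u + k).+2)%N by lia.
have -> : ((u + k).+3 - u.+2 = k.+1)%N by lia.
have -> : (u.+2 - 1 = u.+1)%N by lia.
have -> : (u.+2 - 2 = u)%N by lia.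
have -> : (u.+3 - 1 = u.+2)%N by lia.
have -> : (u.+3 - 2 = u.+1)%N by lia.
move En0 : (u + k).+1 => n0.
have r1 : (k.+1 * 'C(n0, u) = u.+1 * 'C(n0, u.+1))%N.
  by rewrite mul_bin_left; congr (_ * _)%N; rewrite -En0; lia.
have r2 : (k * 'C(n0, u.+1) = u.+2 * 'C(n0, u.+2))%N.
  by rewrite mul_bin_left; congr (_ * _)%N; rewrite -En0; lia.
have r3 : (u.+3 * 'C(n0, u.+3) + 'C(n0, u.+2) = k * 'C(n0, u.+2))%N.
  rewrite mul_bin_left; case: (posnP k) => [k0|kpos].
    by rewrite (bin_small (n := n0)) ?muln0 // -En0 k0; lia.
  have -> : (n0 - u.+2 = k.-1)%N by rewrite -En0; lia.
  by rewrite addnC -mulSn prednK.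
rewrite (binS n0.+1 u.+2) (binS n0 u.+1) (binS n0 u.+2).
move: r1 r2 r3; set a := 'C(n0, u); set b := 'C(n0, u.+1); set c := 'C(n0, u.+2);
  set d := 'C(n0, u.+3) => r1 r2 r3.
have R1 : (k.+1)%:R * a%:R - (u.+1)%:R * b%:R = 0 :> R.
  by apply/eqP; rewrite subr_eq0 -!natrM r1.
have R2 : k%:R * b%:R - (u.+2)%:R * c%:R = 0 :> R.
  by apply/eqP; rewrite subr_eq0 -!natrM r2.
have R3 : (u.+3)%:R * d%:R + c%:R - k%:R * c%:R = 0 :> R.
  by apply/eqP; rewrite subr_eq0 -!natrM -natrD r3.
apply/eqP; rewrite -subr_eq0; apply/eqP.
transitivity (D * ((k.+1)%:R * a%:R - (u.+1)%:R * b%:R)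
  - beta * ((u%:R + k%:R + 4) * (k%:R * b%:R - (u.+2)%:R * c%:R)
             - ((u.+3)%:R * d%:R + c%:R - k%:R * c%:R))
  + (k%:R + 3) * (k%:R * b%:R - (u.+2)%:R * c%:R)
  + u%:R * ((u.+3)%:R * d%:R + c%:R - k%:R * c%:R)).
  rewrite -En0; ring.
by rewrite R1 R2 R3; ring.
Qed.

Lemma key (R : archiRealFieldType) (beta : R) (p : nat) :
  0 < beta -> (p%:Z = Num.ceil (beta^-1) - 1)%R -> 1 <= (p%:R + 1) * beta.
Proof.
move=> b0 hp.
have h : beta^-1 <= p%:R + 1.
  have := ceil_ge (beta^-1).
  have -> : Num.ceil beta^-1 = p%:Z + 1 by rewrite hp; ring.
  by rewrite rmorphD /= rmorph1.
have : beta^-1 * beta <= (p%:R + 1) * beta by rewrite ler_pM2r.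
by rewrite mulVf // gt_eqF.
Qed.

Theorem mainTheorem11 (R : archiRealFieldType) (beta : R) (p : nat)
  (V : finType) (e : rel V) :
  0 < beta -> beta < 1 ->
  (p%:Z = Num.ceil (beta^-1) - 1)%R ->
  simple_graph e ->
  (* the minimum degree of G is (1 - beta) n, n = |V(G)| *)
  (forall v : V, (1 - beta) * (#|V|)%:R <= (vdeg e v)%:R) ->
  (exists v : V, (vdeg e v)%:R = (1 - beta) * (#|V|)%:R) ->
  (forall s t : nat, (2 <= t)%N -> (t < s)%N -> (s <= p.+1)%N ->
     forall S : {set V}, S \in Kcl e s ->
       \sum_(T in Kcl_in e t S) Dminus e p beta T >=
         (1 - beta) * s%:R * ('C(s - 2, t - 1))%:R
         - (t - 1)%:R * ('C(s - 1, t))%:R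
         + ('C(s - 2, t - 2))%:R * Dminus e p beta S)
  /\
  (forall t : nat, (2 <= t)%N -> (t <= p)%N ->
     forall S : {set V}, S \in Kcl e t.+1 ->
       0 <= \sum_(T in Kcl_in e t S) Dminus e p beta T
            - (2 - (t.+1)%:R * beta + (t - 1)%:R * Dminus e p beta S)).
Proof.
move=> b0 b1 hp [sym irr] hdeg [v0 _].
have n0 : (0 < #|V|)%N by apply/card_gt0P; exists v0.
have hk := key b0 hp.
split; last first.
  by move=> t t2 tp S SK; rewrite subr_ge0; apply: base.
move=> s t t2 ts sp S SK.
move: (SK); rewrite /Kcl inE => /andP[Scl /eqP cS].
suff H : forall k t', (2 <= t')%N -> (t' + k = s)%N ->
    (1 - beta) * s%:R * ('C(s - 2, t' - 1))%:R
         - (t' - 1)%:R * ('C(s - 1, t'))%:R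
         + ('C(s - 2, t' - 2))%:R * Dminus e p beta S
    <= \sum_(T in Kcl_in e t' S) Dminus e p beta T.
  by apply: (H (s - t)%N) => //; lia.
elim => [|k IH] t' t2' E.
  rewrite addn0 in E; subst t'.
  have -> : Kcl_in e s S = [set S] by rewrite -cS Kcl_in_self.
  rewrite big_set1 (bin_small (n := (s - 2)%N)); last by lia.
  rewrite (bin_small (n := (s - 1)%N)); last by lia.
  rewrite binn !mulr0 subrr add0r mul1r //.
have IH' := IH t'.+1 (leqW t2') (etrans (addSnnS t' k) E).
have ts' : (t' < s)%N by lia.
have hdc := double_count t' (Dminus e p beta) Scl.
have hb : \sum_(U in Kcl_in e t'.+1 S)
      (2 - (t'.+1)%:R * beta + (t' - 1)%:R * Dminus e p beta U)
    <= \sum_(U in Kcl_in e t'.+1 S) \sum_(T in Kcl_in e t' U) Dminus e p beta T.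
  apply: ler_sum => U; rewrite /Kcl_in inE => /andP[UK _].
  exact: base.
rewrite big_split /= sumr_const -mulr_sumr (card_Kcl_in _ Scl) cS hdc cS in hb.
have hid := binom_id beta (Dminus e p beta S) t2' ts'.
have st0 : 0 < (s - t')%:R :> R by rewrite ltr0n subn_gt0.
rewrite -(ler_pM2l st0) hid.
have h1 : 0 <= (t' - 1)%:R :> R by apply: ler0n.
have := ler_wpM2l h1 IH'.
rewrite -mulr_natl mulrC in hb.
lra.
Qed.
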